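(* Let $\lambda>0$, $\ell>0$ and let $n\ge n_{\lambda,\ell}$ be an integer. Then $\mathcal{E}_\lambda[\gamma_{\rm larc}^{\lambda,\ell,n}]\le\mathcal{E}_\lambda[\gamma_{\rm sarc}^{\lambda,\ell,n}]$, with equality if and only if $\lambda\ell^2=m^2\hat\lambda$ for some $m\in\mathbb{N}$ and $n=n_{\lambda,\ell}$.
   Context: Elliptic functions: for $q\in[0,1)$, $x\in\mathbb{R}$, $\mathrm{F}(x,q)=\int_0^x(1-q^2\sin^2\theta)^{-1/2}\,d\theta$, $\mathrm{E}(x,q)=\int_0^x(1-q^2\sin^2\theta)^{1/2}\,d\theta$, $\mathrm{K}(q)=\mathrm{F}(\pi/2,q)$, $\mathrm{E}(q)=\mathrm{E}(\pi/2,q)$; $\mathrm{am}(\cdot,q)$ is the inverse of $x\mapsto\mathrm{F}(x,q)$, $\mathrm{cn}(x,q)=\cos\mathrm{am}(x,q)$. The function $q\mapsto2\mathrm{E}(q)-\mathrm{K}(q)$ is strictly decreasing on $[0,1)$ with unique zero $q_*\in(0,1)$. On $[1/\sqrt2,1)$ let $f(q)=(4q^4-5q^2+1)\mathrm{K}(q)+(-8q^4+8q^2-1)\mathrm{E}(q)$ and $g(q)=8(2\mathrm{E}(q)-\mathrm{K}(q))^2(2q^2-1)$. $f$ has a unique zero $\hat q\in[1/\sqrt2,1)$; $\hat\lambda:=g(\hat q)\approx0.70107$. $g(1/\sqrt2)=0$, $g$ strictly increasing on $[1/\sqrt2,\hat q]$, strictly decreasing on $[\hat q,q_*]$. For $c\in(0,\hat\lambda]$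 let $q_1(c)\in(1/\sqrt2,\hat q]$, $q_2(c)\in[\hat q,q_* )$ solve $g(q)=c$ ($q_1(\hat\lambda)=q_2(\hat\lambda)=\hat q$). $n_{\lambda,\ell}=\lceil\sqrt{\lambda\ell^2/\hat\lambda}\rceil$. $\mathcal{E}_\lambda[\gamma]=\int_\gamma k^2\,ds+\lambda L[\gamma]$ ($k$ signed curvature, $s$ arclength, $L$ length). Curves (arclength parametrized on $[0,2n\mathrm{K}(q)/\alpha]$): for $n\ge n_{\lambda,\ell}$, $\gamma_{\rm sarc}^{\lambda,\ell,n}(s)=\frac1\alpha\big(2\mathrm{E}(\mathrm{am}(\alpha s-\mathrm{K}(q),q),q)+2\mathrm{E}(q)-\alpha s,\ 2q\,\mathrm{cn}(\alpha s-\mathrm{K}(q),q)\big)$ with $q=q_1(\lambda\ell^2/n^2)$, $\alpha=\frac{2n}{\ell}(2\mathrm{E}(q)-\mathrm{K}(q))$; $\gamma_{\rm larc}^{\lambda,\ell,n}$ is the same formula with $q=q_2(\lambda\ell^2/n^2)$. *)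

(* Defs.v *)
From Stdlib Require Import Reals Lra ZArith ClassicalEpsilon.
From Coquelicot Require Import Coquelicot.
Open Scope R_scope.

Definition EllF (x q : R) : R :=
  RInt (fun th => / sqrt (1 - q ^ 2 * (sin th) ^ 2)) 0 x.
Definition EllE (x q : R) : R :=
  RInt (fun th => sqrt (1 - q ^ 2 * (sin th) ^ 2)) 0 x.
Definition EllK (q : R) : R := EllF (PI / 2) q.
Definition EllEc (q : R) : R := EllE (PI / 2) q.

(* Jacobi amplitude: the inverse of x |-> F(x,q) (chosen by epsilon; for
   q in [0,1) it is the unique x with F(x,q) = u). *)
Definition am (u q : R) : R :=
  epsilon (inhabits 0) (fun x => EllF x q = u).
Definition cn (u q : R) : R := cos (am u q).

Definition qstar : R :=
  epsilon (inhabits 0) (fun q => 0 < q < 1 /\ 2 * EllEc q - EllK q = 0).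

Definition ff (q : R) : R :=
  (4 * q ^ 4 - 5 * q ^ 2 + 1) * EllK q + (- 8 * q ^ 4 + 8 * q ^ 2 - 1) * EllEc q.
Definition gg (q : R) : R :=
  8 * (2 * EllEc q - EllK q) ^ 2 * (2 * q ^ 2 - 1).

Definition qhat : R :=
  epsilon (inhabits 0) (fun q => / sqrt 2 <= q < 1 /\ ff q = 0).
Definition lamhat : R := gg qhat.

Definition q1 (c : R) : R :=
  epsilon (inhabits 0) (fun q => / sqrt 2 < q <= qhat /\ gg q = c).
Definition q2 (c : R) : R :=
  epsilon (inhabits 0) (fun q => qhat <= q < qstar /\ gg q = c).

Definition ceilZ (x : R) : Z :=
  if Req_EM_T (IZR (up x) - 1) x then (up x - 1)%Z else up x.

Definition nlam (lam l : R) : nat :=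
  Z.to_nat (ceilZ (sqrt (lam * l ^ 2 / lamhat))).

Definition xc (g : R -> R * R) (s : R) : R := fst (g s).
Definition yc (g : R -> R * R) (s : R) : R := snd (g s).
Definition speed (g : R -> R * R) (s : R) : R :=
  sqrt ((Derive (xc g) s) ^ 2 + (Derive (yc g) s) ^ 2).
Definition curv (g : R -> R * R) (s : R) : R :=
  (Derive (xc g) s * Derive (Derive (yc g)) s
   - Derive (yc g) s * Derive (Derive (xc g)) s) / (speed g s) ^ 3.
Definition Energy (lam : R) (g : R -> R * R) (L : R) : R :=
  RInt (fun s => (curv g s) ^ 2 * speed g s) 0 L
  + lam * RInt (fun s => speed g s) 0 L.

Definition alpha_of (l : R) (n : nat) (q : R) : R :=
  2 * INR n / l * (2 * EllEc q - EllK q).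
Definition gamma_q (l : R) (n : nat) (q : R) (s : R) : R * R :=
  let a := alpha_of l n q in
  (/ a * (2 * EllE (am (a * s - EllK q) q) q + 2 * EllEc q - a * s),
   / a * (2 * q * cn (a * s - EllK q) q)).
Definition length_q (l : R) (n : nat) (q : R) : R :=
  2 * INR n * EllK q / alpha_of l n q.

Definition q_sarc (lam l : R) (n : nat) : R := q1 (lam * l ^ 2 / (INR n) ^ 2).
Definition q_larc (lam l : R) (n : nat) : R := q2 (lam * l ^ 2 / (INR n) ^ 2).

Definition gamma_sarc (lam l : R) (n : nat) : R -> R * R :=
  gamma_q l n (q_sarc lam l n).
Definition gamma_larc (lam l : R) (n : nat) : R -> R * R :=
  gamma_q l n (q_larc lam l n).

Definition energy_sarc (lam l : R) (n : nat) : R :=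
  Energy lam (gamma_sarc lam l n) (length_q l n (q_sarc lam l n)).
Definition energy_larc (lam l : R) (n : nat) : R :=
  Energy lam (gamma_larc lam l n) (length_q l n (q_larc lam l n)).

(* Main.v *)
Require Import Defs.
From Stdlib Require Import Reals Lra Lia ClassicalEpsilon Ranalysis5 ZArith FunctionalExtensionality.
From Coquelicot Require Import Coquelicot.
Open Scope R_scope.

Ltac sd := repeat match goal with |- _ /\ _ => split | |- True => exact I end.

Lemma Dpos q t : q ^ 2 < 1 -> 0 < 1 - q ^ 2 * sin t ^ 2.
Proof.
  intros Hq. assert (0 <= sin t ^ 2 <= 1).
  { pose proof (sin2 t). pose proof (SIN_bound t). nra. }
  nra.
Qed.
Lemma sqD_pos q t : q ^ 2 < 1 -> 0 < sqrt (1 - q ^ 2 * sin t ^ 2).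
Proof. intros; apply sqrt_lt_R0, Dpos; auto. Qed.
Lemma sqD_neq q t : q ^ 2 < 1 -> sqrt (1 - q ^ 2 * sin t ^ 2) <> 0.
Proof. intros; apply Rgt_not_eq, sqD_pos; auto. Qed.

Ltac dside q t Hq := sd; try (apply Dpos; exact Hq); try (apply sqD_neq; exact Hq);
   try (apply sqD_pos; exact Hq).

Lemma cont_invsq q t : q ^ 2 < 1 -> continuous (fun th => / sqrt (1 - q ^ 2 * sin th ^ 2)) t.
Proof.
  intros Hq. apply (@ex_derive_continuous R_AbsRing R_NormedModule). auto_derive. dside q t Hq.
Qed.


Lemma exRI_cont (f : R -> R) a b : (forall x, continuous f x) -> ex_RInt f a b.
Proof. intros H. apply (@ex_RInt_continuous R_CompleteNormedModule). intros; apply H. Qed.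

Lemma cont_der (f : R -> R) x : ex_derive f x -> continuous f x.
Proof. apply (@ex_derive_continuous R_AbsRing R_NormedModule). Qed.

Definition J1 q : R := RInt (fun t => sin t ^ 2 / sqrt (1 - q ^ 2 * sin t ^ 2)) 0 (PI/2).
Definition J3 q : R := RInt (fun t => sin t ^ 2 / (sqrt (1 - q ^ 2 * sin t ^ 2) * (1 - q ^ 2 * sin t ^ 2))) 0 (PI/2).

Lemma exK q a b : q^2 < 1 -> ex_RInt (fun t => / sqrt (1 - q ^ 2 * sin t ^ 2)) a b.
Proof. intros Hq; apply exRI_cont; intros; apply cont_der; auto_derive; dside q x Hq. Qed.
Lemma exE q a b : q^2 < 1 -> ex_RInt (fun t => sqrt (1 - q ^ 2 * sin t ^ 2)) a b.
Proof. intros Hq; apply exRI_cont; intros; apply cont_der; auto_derive; dside q x Hq. Qed.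
Lemma exJ1 q a b : q^2 < 1 -> ex_RInt (fun t => sin t ^ 2 / sqrt (1 - q ^ 2 * sin t ^ 2)) a b.
Proof. intros Hq; apply exRI_cont; intros; apply cont_der; auto_derive; dside q x Hq. Qed.
Lemma exJ3 q a b : q^2 < 1 -> ex_RInt (fun t => sin t ^ 2 / (sqrt (1 - q ^ 2 * sin t ^ 2) * (1 - q ^ 2 * sin t ^ 2))) a b.
Proof. intros Hq; apply exRI_cont; intros; apply cont_der; auto_derive; dside q x Hq.
  replace (1 + - (q * (q * 1) * (sin x * (sin x * 1)))) with (1 - q ^ 2 * sin x ^ 2) by ring.
  apply Rmult_integral_contrapositive_currified; [apply sqD_neq; auto| apply Rgt_not_eq, Dpos; auto]. Qed.

Lemma KmE q : q^2 < 1 -> EllK q - EllEc q = q ^ 2 * J1 q.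
Proof.
  intros Hq. unfold EllK, EllEc, EllF, EllE, J1.
  rewrite <- (RInt_minus (V:=R_CompleteNormedModule)); [|apply exK; auto|apply exE; auto].
  rewrite <- (RInt_scal (V:=R_CompleteNormedModule)); [|apply exJ1; auto].
  apply RInt_ext. intros x _. unfold minus, plus, opp, scal; simpl.
  unfold mult; simpl.
  pose proof (sqD_pos q x Hq). pose proof (sqrt_sqrt (1 - q ^ 2 * sin x ^ 2) (Rlt_le _ _ (Dpos q x Hq))).
  replace (q * (q * 1)) with (q^2) by ring. replace (sin x * (sin x * 1)) with (sin x ^2) by ring.
  set (s := sqrt (1 - q ^ 2 * sin x ^ 2)) in *. 
  assert (s <> 0) by lra.
  apply (Rmult_eq_reg_r s); [|auto]. field_simplify; auto. replace (s^2) with (s*s) by ring. rewrite H0. ring.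
Qed.

Definition Gq q t := sin t * cos t / sqrt (1 - q ^ 2 * sin t ^ 2).

Lemma J3rel q : q^2 < 1 -> (1 - q ^ 2) * J3 q = EllK q - J1 q.
Proof.
  intros Hq.
  assert (H : is_RInt (fun t => / sqrt (1 - q ^ 2 * sin t ^ 2) - sin t ^ 2 / sqrt (1 - q ^ 2 * sin t ^ 2)
       - (1 - q^2) * (sin t ^ 2 / (sqrt (1 - q ^ 2 * sin t ^ 2) * (1 - q ^ 2 * sin t ^ 2)))) 0 (PI/2)
       (minus (Gq q (PI/2)) (Gq q 0))).
  { apply (@is_RInt_derive R_CompleteNormedModule (Gq q)).
    - intros x _. unfold Gq. auto_derive; [dside q x Hq|].
      pose proof (sqD_pos q x Hq) as Hs. pose proof (sqrt_sqrt (1 - q ^ 2 * sin x ^ 2) (Rlt_le _ _ (Dpos q x Hq))) as H0.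
      replace (1 + - (q * (q * 1) * (sin x * (sin x * 1)))) with (1 - q ^ 2 * sin x ^ 2) by ring.
      pose proof (Dpos q x Hq) as HD.
      set (s := sqrt (1 - q ^ 2 * sin x ^ 2)) in *.
      set (D := 1 - q ^ 2 * sin x ^ 2) in *.
      field_simplify; [|lra|lra].
      replace (s^3) with (s*D) by (rewrite <- H0; ring).
      replace (s^2) with D by (rewrite <- H0; ring).
      assert (Hc : cos x ^ 2 = 1 - sin x ^ 2) by (pose proof (sin2_cos2 x); unfold Rsqr in *; nra).
      rewrite Hc. unfold D in *. field. rewrite Rpow_mult_distr. split; lra.
    - intros x _. apply cont_der. auto_derive; dside q x Hq.
      replace (1 + - (q * (q * 1) * (sin x * (sin x * 1)))) with (1 - q ^ 2 * sin x ^ 2) by ring.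
      apply Rmult_integral_contrapositive_currified; [apply sqD_neq; auto| apply Rgt_not_eq, Dpos; auto]. }
  pose proof (RInt_correct _ _ _ (exK q 0 (PI/2) Hq)) as HK.
  pose proof (RInt_correct _ _ _ (exJ1 q 0 (PI/2) Hq)) as HJ1.
  pose proof (RInt_correct _ _ _ (exJ3 q 0 (PI/2) Hq)) as HJ3.
  pose proof (is_RInt_minus _ _ _ _ _ _ (is_RInt_minus _ _ _ _ _ _ HK HJ1) (is_RInt_scal _ _ _ (1 - q^2) _ HJ3)) as H2.
  apply (@is_RInt_unique R_CompleteNormedModule) in H.
  apply (@is_RInt_unique R_CompleteNormedModule) in H2.
  assert (E : minus (minus (RInt (fun t => / sqrt (1 - q ^ 2 * sin t ^ 2)) 0 (PI/2)) (J1 q)) (scal (1 - q^2) (J3 q)) = minus (Gq q (PI/2)) (Gq q 0)).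
  { eapply eq_trans; [symmetry; apply H2|]. eapply eq_trans; [|apply H]. reflexivity. }
  unfold Gq in E. rewrite sin_PI2, cos_PI2, sin_0 in E.
  rewrite !Rmult_0_r, !Rmult_0_l in E. rewrite !Rdiv_0_l in E.
  change (minus (minus (RInt (fun t => / sqrt (1 - q ^ 2 * sin t ^ 2)) 0 (PI/2)) (J1 q)) (scal (1 - q^2) (J3 q)) = minus 0 0) with
   ((RInt (fun t => / sqrt (1 - q ^ 2 * sin t ^ 2)) 0 (PI/2) - J1 q) - (1 - q^2) * J3 q = 0 - 0) in E.
  unfold EllK, EllF. lra.
Qed.


Lemma sq_lt1 q : q^2 < 1 <-> Rabs q < 1.
Proof.
  split; intros H.
  - destruct (Rle_or_lt 1 (Rabs q)); auto. exfalso.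
    rewrite <- (pow2_abs q) in H. nra.
  - rewrite <- (pow2_abs q). pose proof (Rabs_pos q). nra.
Qed.

Lemma loc_sq q : q^2 < 1 -> locally q (fun x => x^2 < 1).
Proof.
  intros Hq. apply sq_lt1 in Hq.
  assert (He : 0 < 1 - Rabs q) by lra.
  exists (mkposreal _ He). intros y Hy. apply sq_lt1.
  change (Rabs (y - q) < 1 - Rabs q) in Hy.
  pose proof (Rabs_triang_inv y q). lra.
Qed.

Lemma loc2_sq q t : q^2 < 1 -> locally_2d (fun u v => u^2 < 1) q t.
Proof.
  intros Hq. apply sq_lt1 in Hq.
  assert (He : 0 < 1 - Rabs q) by lra.
  exists (mkposreal _ He). intros u v Hu _. apply sq_lt1. simpl in Hu.
  pose proof (Rabs_triang_inv u q). lra.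
Qed.

Lemma c2_sinv x y : continuity_2d_pt (fun u v => sin v) x y.
Proof. apply (continuity_1d_2d_pt_comp sin (fun u v => v)). apply continuity_sin. apply continuity_2d_pt_id2. Qed.

Lemma c2_D x y : continuity_2d_pt (fun u v => 1 - u ^ 2 * sin v ^ 2) x y.
Proof.
  apply (continuity_2d_pt_ext (fun u v => 1 - (u * u) * (sin v * sin v))). { intros; ring. }
  apply continuity_2d_pt_minus. apply continuity_2d_pt_const.
  apply continuity_2d_pt_mult; apply continuity_2d_pt_mult; try apply c2_sinv; apply continuity_2d_pt_id1.
Qed.

Lemma c2_sqD x y : x^2 < 1 -> continuity_2d_pt (fun u v => sqrt (1 - u ^ 2 * sin v ^ 2)) x y.
Proof.
  intros Hx. apply (continuity_1d_2d_pt_comp sqrt (fun u v => 1 - u ^ 2 * sin v ^ 2)).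
  apply continuity_pt_sqrt. apply Rlt_le, Dpos; auto. apply c2_D.
Qed.

Lemma c2_sin2 x y : continuity_2d_pt (fun u v => sin v ^ 2) x y.
Proof.
  apply (continuity_2d_pt_ext (fun u v => sin v * sin v)). { intros; ring. }
  apply continuity_2d_pt_mult; apply c2_sinv.
Qed.

Lemma dKu u v : u^2 < 1 -> is_derive (fun z => / sqrt (1 - z ^ 2 * sin v ^ 2)) u
   (u * (sin v ^ 2 / (sqrt (1 - u ^ 2 * sin v ^ 2) * (1 - u ^ 2 * sin v ^ 2)))).
Proof.
  intros Hu. auto_derive; [dside u v Hu|].
  replace (1 + - (u * (u * 1) * (sin v * (sin v * 1)))) with (1 - u ^ 2 * sin v ^ 2) by ring.
  pose proof (sqD_pos u v Hu) as Hs. pose proof (sqrt_sqrt (1 - u ^ 2 * sin v ^ 2) (Rlt_le _ _ (Dpos u v Hu))) as H0.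
  pose proof (Dpos u v Hu) as HD.
  set (s := sqrt (1 - u ^ 2 * sin v ^ 2)) in *.
  set (D := 1 - u ^ 2 * sin v ^ 2) in *.
  rewrite <- H0. field. lra.
Qed.

Lemma dEu u v : u^2 < 1 -> is_derive (fun z => sqrt (1 - z ^ 2 * sin v ^ 2)) u
   (- u * (sin v ^ 2 / sqrt (1 - u ^ 2 * sin v ^ 2))).
Proof.
  intros Hu. auto_derive; [dside u v Hu|].
  replace (1 + - (u * (u * 1) * (sin v * (sin v * 1)))) with (1 - u ^ 2 * sin v ^ 2) by ring.
  pose proof (sqD_pos u v Hu) as Hs. field. lra.
Qed.

Lemma dK q : q^2 < 1 -> is_derive EllK q (q * J3 q).
Proof.
  intros Hq. unfold EllK, EllF.
  assert (H := is_derive_RInt_param (fun u t => / sqrt (1 - u ^ 2 * sin t ^ 2)) 0 (PI/2) q).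
  replace (q * J3 q) with (RInt (fun t => Derive (fun u => / sqrt (1 - u ^ 2 * sin t ^ 2)) q) 0 (PI/2)).
  - apply H.
    + generalize (loc_sq q Hq). apply filter_imp. intros x Hx t _. eexists. apply dKu; auto.
    + intros t _. 
      apply (continuity_2d_pt_ext_loc (fun u v => u * (sin v ^ 2 / (sqrt (1 - u ^ 2 * sin v ^ 2) * (1 - u ^ 2 * sin v ^ 2))))).
      { destruct (loc2_sq q t Hq) as [d Hd]. exists d. intros u v Hu Hv. symmetry. apply is_derive_unique, dKu. apply (Hd u v Hu Hv). }
      apply continuity_2d_pt_mult. apply continuity_2d_pt_id1.
      apply continuity_2d_pt_mult. apply c2_sin2.
      apply continuity_2d_pt_inv. apply continuity_2d_pt_mult. apply c2_sqD; auto. apply c2_D.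
      apply Rmult_integral_contrapositive_currified; [apply sqD_neq; auto| apply Rgt_not_eq, Dpos; auto].
    + generalize (loc_sq q Hq). apply filter_imp. intros x Hx. apply exK; auto.
  - unfold J3. rewrite <- (RInt_scal (V:=R_CompleteNormedModule)); [|apply exJ3; auto].
    apply RInt_ext. intros x _. apply is_derive_unique, dKu; auto.
Qed.

Lemma dE q : q^2 < 1 -> is_derive EllEc q (- q * J1 q).
Proof.
  intros Hq. unfold EllEc, EllE.
  assert (H := is_derive_RInt_param (fun u t => sqrt (1 - u ^ 2 * sin t ^ 2)) 0 (PI/2) q).
  replace (- q * J1 q) with (RInt (fun t => Derive (fun u => sqrt (1 - u ^ 2 * sin t ^ 2)) q) 0 (PI/2)).
  - apply H.
    + generalize (loc_sq q Hq). apply filter_imp. intros x Hx t _. eexists. apply dEu; auto.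
    + intros t _. 
      apply (continuity_2d_pt_ext_loc (fun u v => - u * (sin v ^ 2 * / sqrt (1 - u ^ 2 * sin v ^ 2)))).
      { destruct (loc2_sq q t Hq) as [d Hd]. exists d. intros u v Hu Hv. symmetry. apply is_derive_unique, dEu. apply (Hd u v Hu Hv). }
      apply continuity_2d_pt_mult. apply continuity_2d_pt_opp, continuity_2d_pt_id1.
      apply continuity_2d_pt_mult. apply c2_sin2.
      apply continuity_2d_pt_inv. apply c2_sqD; auto. apply sqD_neq; auto.
    + generalize (loc_sq q Hq). apply filter_imp. intros x Hx. apply exE; auto.
  - unfold J1. rewrite <- (RInt_scal (V:=R_CompleteNormedModule)); [|apply exJ1; auto].
    apply RInt_ext. intros x _. apply is_derive_unique, dEu; auto.
Qed.


Lemma PI2_pos : 0 < PI / 2. Proof. pose proof PI_RGT_0; lra. Qed.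

Lemma Isin2 : RInt (fun t => sin t ^ 2) 0 (PI/2) = PI/4.
Proof.
  apply is_RInt_unique.
  assert (H : is_RInt (fun t => sin t ^ 2) 0 (PI/2)
     (minus ((fun t => (t - sin t * cos t)/2) (PI/2)) ((fun t => (t - sin t * cos t)/2) 0))).
  { apply (@is_RInt_derive R_CompleteNormedModule (fun t => (t - sin t * cos t)/2)).
    - intros x _. auto_derive; auto.
      pose proof (sin2_cos2 x). unfold Rsqr in *. nra.
    - intros x _. apply cont_der. auto_derive; auto. }
  simpl in H. rewrite sin_PI2, cos_PI2, sin_0, cos_0 in H.
  replace (PI/4) with (minus ((PI / 2 - 1 * 0) / 2) ((0 - 0 * 1) / 2)). exact H.
  unfold minus, plus, opp; simpl. field.
Qed.

Lemma exsin2 a b : ex_RInt (fun t => sin t ^ 2) a b.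
Proof. apply exRI_cont; intros; apply cont_der; auto_derive; auto. Qed.

Lemma sqD_le1 q t : q^2 < 1 -> sqrt (1 - q ^ 2 * sin t ^ 2) <= 1.
Proof.
  intros Hq. assert (0 <= q^2 * sin t^2) by (apply Rmult_le_pos; apply pow2_ge_0).
  apply Rle_trans with (sqrt 1); [apply sqrt_le_1_alt; lra | rewrite sqrt_1; lra].
Qed.

Lemma inv_ge1 a : 0 < a -> a <= 1 -> 1 <= / a.
Proof. intros. rewrite <- Rinv_1 at 1. apply Rinv_le_contravar; auto. Qed.

Lemma J1_ge q : q^2 < 1 -> PI/4 <= J1 q.
Proof.
  intros Hq. rewrite <- Isin2. unfold J1. apply RInt_le.
  - pose proof PI2_pos; lra.
  - apply exsin2.
  - apply exJ1; auto.
  - intros x _. pose proof (sqD_pos q x Hq). pose proof (sqD_le1 q x Hq).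
    pose proof (pow2_ge_0 (sin x)).
    unfold Rdiv. rewrite <- (Rmult_1_r (sin x ^ 2)) at 1. apply Rmult_le_compat_l; auto.
    apply inv_ge1; auto.
Qed.

Lemma J3_ge q : q^2 < 1 -> PI/4 <= J3 q.
Proof.
  intros Hq. rewrite <- Isin2. unfold J3. apply RInt_le.
  - pose proof PI2_pos; lra.
  - apply exsin2.
  - apply exJ3; auto.
  - intros x _. pose proof (sqD_pos q x Hq). pose proof (sqD_le1 q x Hq).
    pose proof (Dpos q x Hq).
    assert (1 - q ^ 2 * sin x ^ 2 <= 1) by (assert (0 <= q^2 * sin x^2) by (apply Rmult_le_pos; apply pow2_ge_0); lra).
    pose proof (pow2_ge_0 (sin x)).
    unfold Rdiv. rewrite <- (Rmult_1_r (sin x ^ 2)) at 1. apply Rmult_le_compat_l; auto.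
    apply inv_ge1. nra. 
    apply Rle_trans with (1*1); [apply Rmult_le_compat; lra| lra].
Qed.

Lemma RInt_cR a b (c : R) : RInt (fun _ => c) a b = (b - a) * c.
Proof. rewrite RInt_const. reflexivity. Qed.

Lemma RInt_cst1 a b : RInt (fun _ => 1) a b = b - a.
Proof. rewrite RInt_const. unfold scal; simpl. unfold mult; simpl. apply Rmult_1_r. Qed.

Lemma K_ge q : q^2 < 1 -> PI/2 <= EllK q.
Proof.
  intros Hq. apply Rle_trans with (RInt (fun _ => 1) 0 (PI/2)); [rewrite RInt_cst1; lra|].
  unfold EllK, EllF. apply RInt_le.
  - pose proof PI2_pos; lra.
  - apply ex_RInt_const.
  - apply exK; auto.
  - intros x _. pose proof (sqD_pos q x Hq). pose proof (sqD_le1 q x Hq).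
    apply inv_ge1; auto.
Qed.

Lemma E_le q : q^2 < 1 -> EllEc q <= PI/2.
Proof.
  intros Hq. apply Rle_trans with (RInt (fun _ => 1) 0 (PI/2)); [|rewrite RInt_cst1; lra].
  unfold EllEc, EllE. apply RInt_le.
  - pose proof PI2_pos; lra.
  - apply exE; auto.
  - apply ex_RInt_const.
  - intros x _. apply sqD_le1; auto.
Qed.

Lemma E_pos q : q^2 < 1 -> 0 < EllEc q.
Proof.
  intros Hq.
  assert (Hc : 0 < sqrt (1 - q^2)) by (apply sqrt_lt_R0; lra).
  apply Rlt_le_trans with (RInt (fun _ => sqrt (1 - q^2)) 0 (PI/2)).
  { rewrite RInt_cR. pose proof PI2_pos. apply Rmult_lt_0_compat; lra. }
  unfold EllEc, EllE. apply RInt_le.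
  - pose proof PI2_pos; lra.
  - apply ex_RInt_const.
  - apply exE; auto.
  - intros x _. apply sqrt_le_1_alt. pose proof (SIN_bound x). pose proof (pow2_ge_0 q).
    assert (sin x ^ 2 <= 1) by nra. nra.
Qed.

Lemma K0 : EllK 0 = PI/2.
Proof.
  unfold EllK, EllF. transitivity (RInt (fun _ => 1) 0 (PI/2)); [|rewrite RInt_cst1; ring]. apply RInt_ext. intros.
  replace (1 - 0 ^ 2 * sin x ^ 2) with 1 by ring. rewrite sqrt_1. apply Rinv_1.
Qed.
Lemma E0 : EllEc 0 = PI/2.
Proof.
  unfold EllEc, EllE. transitivity (RInt (fun _ => 1) 0 (PI/2)); [|rewrite RInt_cst1; ring]. apply RInt_ext. intros.
  replace (1 - 0 ^ 2 * sin x ^ 2) with 1 by ring. apply sqrt_1.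
Qed.


Lemma der_cpt f x l : is_derive f x l -> continuity_pt f x.
Proof. intros H. apply continuity_pt_filterlim. apply cont_der. eexists; eauto. Qed.

Lemma mvt f df a b : a <= b -> (forall x, a <= x <= b -> is_derive f x (df x)) ->
  exists c, a <= c <= b /\ f b - f a = df c * (b - a).
Proof.
  intros Hab Hd. destruct (MVT_gen f a b df) as [c [Hc Hf]].
  - intros x Hx. apply Hd. rewrite Rmin_left, Rmax_right in Hx by lra. lra.
  - intros x Hx. rewrite Rmin_left, Rmax_right in Hx by lra. eapply der_cpt. apply Hd. lra.
  - exists c. rewrite Rmin_left, Rmax_right in Hc by lra. split; [lra|exact Hf].
Qed.

Lemma decr_weak f df a b : a <= b -> (forall x, a <= x <= b -> is_derive f x (df x)) ->
  (forall x, a <= x <= b -> df x <= 0) -> f b <= f a.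
Proof.
  intros Hab Hd Hn. destruct (mvt f df a b Hab Hd) as [c [Hc Hf]].
  pose proof (Hn c Hc). nra.
Qed.

Lemma decr_strict f df a b : a < b -> (forall x, a <= x <= b -> is_derive f x (df x)) ->
  (forall x, a <= x <= b -> df x <= 0) -> (forall x, a < x < b -> df x < 0) -> f b < f a.
Proof.
  intros Hab Hd Hn Hs.
  set (m1 := a + (b - a)/3). set (m2 := b - (b-a)/3).
  assert (f m1 <= f a) by (apply (decr_weak f df); [unfold m1; lra| intros; apply Hd; unfold m1 in *; lra | intros; apply Hn; unfold m1 in *; lra]).
  assert (f b <= f m2) by (apply (decr_weak f df); [unfold m2; lra| intros; apply Hd; unfold m2 in *; lra | intros; apply Hn; unfold m2 in *; lra]).
  destruct (mvt f df m1 m2) as [c [Hc Hf]]; [unfold m1, m2; lra| intros; apply Hd; unfold m1, m2 in *; lra|].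
  assert (df c < 0) by (apply Hs; unfold m1, m2 in *; lra).
  assert (m1 < m2) by (unfold m1, m2; lra). nra.
Qed.

Lemma incr_weak f df a b : a <= b -> (forall x, a <= x <= b -> is_derive f x (df x)) ->
  (forall x, a <= x <= b -> 0 <= df x) -> f a <= f b.
Proof.
  intros Hab Hd Hn. assert (- f b <= - f a); [|lra].
  apply (decr_weak (fun x => - f x) (fun x => - df x)); auto.
  intros x Hx. apply (is_derive_opp f x (df x)); auto. intros x Hx; specialize (Hn x Hx); lra.
Qed.

Lemma incr_strict f df a b : a < b -> (forall x, a <= x <= b -> is_derive f x (df x)) ->
  (forall x, a <= x <= b -> 0 <= df x) -> (forall x, a < x < b -> 0 < df x) -> f a < f b.
Proof.
  intros Hab Hd Hn Hs. assert (- f b < - f a); [|lra].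
  apply (decr_strict (fun x => - f x) (fun x => - df x)); auto.
  intros x Hx. apply (is_derive_opp f x (df x)); auto. intros x Hx; specialize (Hn x Hx); lra.
  intros x Hx; specialize (Hs x Hx); lra.
Qed.

Definition hq q := 2 * EllEc q - EllK q.

Lemma dh q : q^2 < 1 -> is_derive hq q (- q * (2 * J1 q + J3 q)).
Proof.
  intros Hq. unfold hq. 
  replace (- q * (2 * J1 q + J3 q)) with (2 * (- q * J1 q) - q * J3 q) by ring.
  apply (is_derive_minus (fun q => 2 * EllEc q) EllK).
  apply (is_derive_scal EllEc). apply dE; auto. apply dK; auto.
Qed.

Lemma sq01 x : 0 <= x < 1 -> x^2 < 1.
Proof. intros. nra. Qed.

Lemma h_decr a b : 0 <= a < b -> b < 1 -> hq b < hq a.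
Proof.
  intros Ha Hb. apply (decr_strict hq (fun q => - q * (2 * J1 q + J3 q))); try lra.
  - intros x Hx. apply dh, sq01; lra.
  - intros x Hx. pose proof (J1_ge x (sq01 x ltac:(lra))). pose proof (J3_ge x (sq01 x ltac:(lra))).
    pose proof PI_RGT_0. nra.
  - intros x Hx. pose proof (J1_ge x (sq01 x ltac:(lra))). pose proof (J3_ge x (sq01 x ltac:(lra))).
    pose proof PI_RGT_0. nra.
Qed.

Lemma h0 : hq 0 = PI/2.
Proof. unfold hq. rewrite K0, E0. field. Qed.

Lemma K_lower q : 0 < q < 1 -> (ln (1 + q) - ln (1 - q)) / (2 * q) <= EllK q.
Proof.
  intros Hq. assert (Hq2 : q^2 < 1) by nra.
  assert (H : is_RInt (fun t => cos t / (1 - q^2 * sin t ^ 2)) 0 (PI/2)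
     (minus ((fun t => (ln (1 + q * sin t) - ln (1 - q * sin t)) / (2 * q)) (PI/2))
            ((fun t => (ln (1 + q * sin t) - ln (1 - q * sin t)) / (2 * q)) 0))).
  { apply (@is_RInt_derive R_CompleteNormedModule (fun t => (ln (1 + q * sin t) - ln (1 - q * sin t)) / (2 * q))).
    - intros x _. pose proof (SIN_bound x).
      assert (0 < 1 + q * sin x) by nra. assert (0 < 1 - q * sin x) by nra.
      auto_derive. repeat split; lra. field. repeat split; try lra. nra.
    - intros x _. apply cont_der. auto_derive. apply Rgt_not_eq, Dpos; auto. }
  apply (@is_RInt_unique R_CompleteNormedModule) in H.
  rewrite sin_PI2, sin_0 in H. 
  replace ((ln (1 + q) - ln (1 - q)) / (2 * q)) with (RInt (fun t => cos t / (1 - q^2 * sin t ^ 2)) 0 (PI/2)).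
  2:{ rewrite H. unfold minus, plus, opp; simpl. rewrite !Rmult_0_r, !Rmult_1_r, Rplus_0_r, Rminus_0_r.
      unfold Rminus. rewrite ln_1. field. lra. }
  unfold EllK, EllF. apply RInt_le.
  - pose proof PI2_pos; lra.
  - apply exRI_cont. intros; apply cont_der. auto_derive. apply Rgt_not_eq, Dpos; auto.
  - apply exK; auto.
  - intros x Hx. pose proof (sqD_pos q x Hq2). pose proof (Dpos q x Hq2).
    pose proof (sqrt_sqrt (1 - q ^ 2 * sin x ^ 2) (Rlt_le _ _ (Dpos q x Hq2))).
    assert (0 <= cos x) by (apply cos_ge_0; lra).
    assert (cos x <= sqrt (1 - q ^ 2 * sin x ^ 2)).
    { apply Rsqr_incr_0_var; [|apply Rlt_le; auto]. unfold Rsqr. rewrite H2.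
      pose proof (sin2_cos2 x). unfold Rsqr in *. pose proof (pow2_ge_0 (sin x)). nra. }
    apply Rle_trans with (sqrt (1 - q ^ 2 * sin x ^ 2) / (1 - q ^ 2 * sin x ^ 2)).
    + unfold Rdiv. apply Rmult_le_compat_r; auto. apply Rlt_le, Rinv_0_lt_compat; auto.
    + right. rewrite <- H2 at 2. field. lra.
Qed.


Lemma h_cpt q : q^2 < 1 -> continuity_pt hq q.
Proof. intros. eapply der_cpt, dh; auto. Qed.

Lemma ln10 : 2 < ln 10.
Proof.
  assert (exp 2 < 10).
  { replace 2 with (1 + 1) by ring. rewrite exp_plus. pose proof exp_le_3. pose proof (exp_pos 1).
    apply Rle_lt_trans with (3 * 3); [apply Rmult_le_compat; lra | lra]. }
  rewrite <- (ln_exp 2) at 1. apply ln_increasing; auto. apply exp_pos.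
Qed.

Lemma q0_neg : hq (9999/10000) < 0.
Proof.
  assert (H := K_lower (9999/10000) ltac:(lra)).
  assert (Hl : ln (1 - 9999/10000) = - (4 * ln 10)).
  { replace (1 - 9999/10000) with (/ (10 ^ 4)) by field.
    rewrite ln_Rinv by (apply pow_lt; lra). rewrite ln_pow by lra. simpl. ring. }
  assert (Hl1 : 0 <= ln (1 + 9999/10000)).
  { rewrite <- ln_1. apply ln_le; lra. }
  rewrite Hl in H. pose proof ln10.
  assert (4 < EllK (9999/10000)).
  { eapply Rlt_le_trans; [|exact H]. apply Rmult_lt_reg_r with (2 * (9999/10000)); [lra|].
    unfold Rdiv. rewrite Rmult_assoc, Rinv_l by lra. lra. }
  pose proof (E_le (9999/10000) ltac:(lra)). pose proof PI_4. unfold hq. lra.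
Qed.

Lemma qstar_ex : exists q, 0 < q < 1 /\ 2 * EllEc q - EllK q = 0.
Proof.
  destruct (IVT_interv (fun q => - hq q) 0 (9999/10000)) as [z [Hz Hf]].
  - intros a Ha. apply continuity_pt_opp. apply h_cpt. apply sq01; lra.
  - lra.
  - rewrite h0. pose proof PI_RGT_0. lra.
  - pose proof q0_neg; lra.
  - exists z. assert (z <> 0). { intro; subst. rewrite h0 in Hf. pose proof PI_RGT_0. lra. }
    split; [lra|]. unfold hq in Hf. lra.
Qed.

Lemma qstar_spec : 0 < qstar < 1 /\ hq qstar = 0.
Proof.
  unfold qstar. destruct (epsilon_spec (inhabits 0) (fun q => 0 < q < 1 /\ 2 * EllEc q - EllK q = 0) qstar_ex) as [H1 H2].
  split; auto.
Qed.

Lemma h_pos q : 0 <= q < qstar -> 0 < hq q.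
Proof.
  intros Hq. destruct qstar_spec as [[H1 H2] H3]. rewrite <- H3. apply h_decr; lra.
Qed.

Lemma h_neg q : qstar < q < 1 -> hq q < 0.
Proof.
  intros Hq. destruct qstar_spec as [[H1 H2] H3]. rewrite <- H3. apply h_decr; lra.
Qed.

Lemma h_pos_inv q : 0 <= q < 1 -> 0 < hq q -> q < qstar.
Proof.
  intros Hq Hh. destruct (Rlt_or_le q qstar) as [|H]; auto.
  destruct qstar_spec as [[H1 H2] H3]. destruct H as [H|H].
  - pose proof (h_neg q ltac:(lra)). lra.
  - subst. lra.
Qed.

Definition r2 := / sqrt 2.
Lemma r2_sq : r2 ^ 2 = / 2.
Proof. unfold r2. rewrite pow_inv. simpl. rewrite Rmult_1_r, sqrt_sqrt; lra. Qed.
Lemma r2_pos : 0 < r2.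
Proof. unfold r2. apply Rinv_0_lt_compat, sqrt_lt_R0; lra. Qed.
Lemma r2_lt1 : r2 < 1.
Proof. pose proof r2_sq; pose proof r2_pos. destruct (Rlt_or_le r2 1); auto. assert (1 * 1 <= r2 * r2) by (apply Rmult_le_compat; lra). simpl in H. lra. Qed.

Lemma cos2p x : cos x ^ 2 = 1 - sin x ^ 2.
Proof. rewrite <- (sin2_cos2 x). unfold Rsqr. ring. Qed.

Lemma Icos2 : RInt (fun t => cos t ^ 2) 0 (PI/2) = PI/4.
Proof.
  transitivity (RInt (fun t => 1 - sin t ^ 2) 0 (PI/2)).
  { apply RInt_ext. intros. apply cos2p. }
  transitivity (minus (RInt (fun _ => 1) 0 (PI/2)) (RInt (fun t => sin t ^ 2) 0 (PI/2))).
  { rewrite <- (RInt_minus (V:=R_CompleteNormedModule)); [reflexivity|apply ex_RInt_const|apply exsin2]. }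
  rewrite RInt_cst1, Isin2. unfold minus, plus, opp; simpl. field.
Qed.

Lemma msR (a b c : R) : minus (scal a b) c = a * b - c.
Proof. reflexivity. Qed.

Lemma RInt_lin (f g : R -> R) a b (c d : R) : ex_RInt f a b -> ex_RInt g a b ->
  RInt (fun t => c * f t - d * g t) a b = c * RInt f a b - d * RInt g a b.
Proof.
  intros Hf Hg.
  apply (@is_RInt_unique R_CompleteNormedModule).
  apply (is_RInt_minus (V:=R_CompleteNormedModule) (fun t => c * f t) (fun t => d * g t)).
  apply (is_RInt_scal (V:=R_CompleteNormedModule) f). apply RInt_correct; auto.
  apply (is_RInt_scal (V:=R_CompleteNormedModule) g). apply RInt_correct; auto.
Qed.

Lemma h_r2 : 0 < hq r2.
Proof.
  assert (Hq : r2 ^ 2 < 1) by (rewrite r2_sq; lra).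
  assert (E1 : hq r2 = RInt (fun t => 2 * sqrt (1 - r2 ^ 2 * sin t ^ 2) - 1 * / sqrt (1 - r2 ^ 2 * sin t ^ 2)) 0 (PI/2)).
  { rewrite (RInt_lin (fun t => sqrt (1 - r2 ^ 2 * sin t ^ 2)) (fun t => / sqrt (1 - r2 ^ 2 * sin t ^ 2))); [|apply exE; auto|apply exK; auto].
    unfold hq, EllEc, EllE, EllK, EllF. ring. }
  rewrite E1. apply Rlt_le_trans with (PI/4); [pose proof PI_RGT_0; lra|].
  rewrite <- Icos2. apply RInt_le.
  - pose proof PI2_pos; lra.
  - apply exRI_cont; intros; apply cont_der; auto_derive; auto.
  - apply (ex_RInt_minus (V:=R_CompleteNormedModule) (fun t => 2 * sqrt (1 - r2 ^ 2 * sin t ^ 2)) (fun t => 1 * / sqrt (1 - r2 ^ 2 * sin t ^ 2))).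
    apply (ex_RInt_scal (V:=R_CompleteNormedModule) (fun t => sqrt (1 - r2 ^ 2 * sin t ^ 2))), exE; auto.
    apply (ex_RInt_scal (V:=R_CompleteNormedModule) (fun t => / sqrt (1 - r2 ^ 2 * sin t ^ 2))), exK; auto.
  - intros x _. rewrite Rmult_1_l.
    pose proof (sqD_pos r2 x Hq). pose proof (sqD_le1 r2 x Hq).
    pose proof (sqrt_sqrt (1 - r2 ^ 2 * sin x ^ 2) (Rlt_le _ _ (Dpos r2 x Hq))).
    set (s := sqrt (1 - r2 ^ 2 * sin x ^ 2)) in *. rewrite r2_sq in H1.
    assert (Hc : cos x ^ 2 = 1 - sin x ^ 2) by apply cos2p.
    assert (2 * s - / s = cos x ^ 2 / s).
    { replace (2*s - /s) with ((2*(s*s) - 1)/s) by (field; lra). rewrite H1, Hc. field; lra. }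
    rewrite H2. unfold Rdiv. rewrite <- (Rmult_1_r (cos x ^ 2)) at 1. apply Rmult_le_compat_l. apply pow2_ge_0.
    apply inv_ge1; auto.
Qed.

Lemma qstar_gt : r2 < qstar.
Proof. apply h_pos_inv. pose proof r2_pos; pose proof r2_lt1; lra. apply h_r2. Qed.


Lemma dmul (f g : R -> R) (x df dg : R) : is_derive f x df -> is_derive g x dg -> is_derive (fun t => f t * g t) x (df * g x + f x * dg).
Proof. intros. apply (is_derive_mult f g); auto. intros; apply Rmult_comm. Qed.
Lemma dplus (f g : R -> R) (x df dg : R) : is_derive f x df -> is_derive g x dg -> is_derive (fun t => f t + g t) x (df + dg).
Proof. intros. apply (is_derive_plus f g); auto. Qed.
Lemma dminus (f g : R -> R) (x df dg : R) : is_derive f x df -> is_derive g x dg -> is_derive (fun t => f t - g t) x (df - dg).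
Proof. intros. apply (is_derive_minus f g); auto. Qed.
Lemma dval (f : R -> R) (x l l' : R) : is_derive f x l -> l = l' -> is_derive f x l'.
Proof. intros; subst; auto. Qed.

Definition Kd q := (EllEc q - (1 - q^2) * EllK q) / (q * (1 - q^2)).
Definition Ed q := (EllEc q - EllK q) / q.

Lemma J1_eq q : 0 < q < 1 -> J1 q = (EllK q - EllEc q) / q^2.
Proof. intros. rewrite KmE by (apply sq01; lra). field. lra. Qed.
Lemma J3_eq q : 0 < q < 1 -> J3 q = (EllK q - J1 q) / (1 - q^2).
Proof. intros. rewrite <- J3rel by (apply sq01; lra). field. assert (q^2 < 1) by (apply sq01; lra). lra. Qed.

Lemma Kd_eq q : 0 < q < 1 -> Kd q = q * J3 q.
Proof.
  intros Hq. rewrite J3_eq, J1_eq by auto. unfold Kd. assert (q^2 < 1) by (apply sq01; lra).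
  field. split; lra.
Qed.
Lemma Ed_eq q : 0 < q < 1 -> Ed q = - q * J1 q.
Proof. intros Hq. rewrite J1_eq by auto. unfold Ed. field. lra. Qed.

Lemma dK' q : 0 < q < 1 -> is_derive EllK q (Kd q).
Proof. intros. rewrite Kd_eq by auto. apply dK, sq01; lra. Qed.
Lemma dE' q : 0 < q < 1 -> is_derive EllEc q (Ed q).
Proof. intros. rewrite Ed_eq by auto. apply dE, sq01; lra. Qed.

Lemma Kd_pos q : 0 < q < 1 -> 0 < Kd q.
Proof. intros. rewrite Kd_eq by auto. pose proof (J3_ge q (sq01 q ltac:(lra))). pose proof PI_RGT_0. nra. Qed.

Lemma hd_neg q : 0 < q < 1 -> 2 * Ed q - Kd q < 0.
Proof. intros. rewrite Kd_eq, Ed_eq by auto. pose proof (J3_ge q (sq01 q ltac:(lra))). pose proof (J1_ge q (sq01 q ltac:(lra))). pose proof PI_RGT_0. nra. Qed.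

Lemma dh' q : 0 < q < 1 -> is_derive hq q (2 * Ed q - Kd q).
Proof. intros. unfold hq. apply dminus. apply (is_derive_scal EllEc). apply dE'; auto. apply dK'; auto. Qed.

Lemma dpoly (a : R -> R) q da : is_derive a q da -> True. Proof. auto. Qed.

Lemma dff q : 0 < q < 1 -> is_derive ff q (q * ((20 * q^2 - 13) * EllK q - 20 * (2 * q^2 - 1) * EllEc q)).
Proof.
  intros Hq. unfold ff.
  eapply dval. apply dplus; apply dmul.
  - instantiate (1 := 16 * q^3 - 10 * q). auto_derive; auto. ring.
  - apply dK'; auto.
  - instantiate (1 := - 32 * q^3 + 16 * q). auto_derive; auto. ring.
  - apply dE'; auto.
  - unfold Kd, Ed. field. assert (q^2 < 1) by (apply sq01; lra). split; lra.
Qed.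

Lemma ff_r2 : 0 < ff r2.
Proof.
  pose proof h_r2. unfold ff. unfold hq in H.
  replace (r2^4) with ((r2^2)^2) by ring. rewrite r2_sq. lra.
Qed.

Lemma fneg_alg x K E : /2 < x < 1 -> 0 < E -> 2*E <= K -> (4*x^2 - 5*x + 1)*K + (-8*x^2 + 8*x - 1)*E < 0.
Proof.
  intros Hx HE HK.
  assert (HA : 4*x^2 - 5*x + 1 < 0) by nra.
  assert ((4*x^2 - 5*x + 1) * (K - 2*E) <= 0) by nra.
  assert ((1 - 2*x) * E < 0) by nra.
  nra.
Qed.

Lemma q2_gt q : r2 < q -> / 2 < q^2.
Proof. intros. pose proof r2_sq. pose proof r2_pos. rewrite <- H0. replace (r2^2) with (r2*r2) by ring. replace (q^2) with (q*q) by ring. apply Rmult_le_0_lt_compat; lra. Qed.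

Lemma ff_neg q : qstar <= q < 1 -> ff q < 0.
Proof.
  intros Hq. destruct qstar_spec as [[H1 H2] H3].
  assert (Hh : hq q <= 0). { destruct (Req_dec q qstar). subst; lra. apply Rlt_le, h_neg; lra. }
  unfold hq in Hh. pose proof qstar_gt.
  assert (Hq2 : / 2 < q^2) by (apply q2_gt; lra).
  assert (Hq1 : q^2 < 1) by (apply sq01; lra).
  pose proof (E_pos q Hq1). unfold ff.
  replace (q^4) with ((q^2)^2) by ring. apply fneg_alg; lra.
Qed.

Lemma m_neg q : r2 < q < qstar -> (20 * q^2 - 13) * EllK q - 20 * (2 * q^2 - 1) * EllEc q < 0.
Proof.
  intros Hq. pose proof (h_pos q ltac:(pose proof r2_pos; lra)). unfold hq in H.
  pose proof (q2_gt q ltac:(lra)). destruct qstar_spec as [[H1 H2] H3].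
  assert (Hq1 : q^2 < 1) by (apply sq01; pose proof r2_pos; lra).
  pose proof (E_pos q Hq1). pose proof (K_ge q Hq1). pose proof PI_RGT_0.
  destruct (Rle_or_lt (20 * q^2 - 13) 0).
  - assert ((20 * q^2 - 13) * EllK q <= 0) by nra. nra.
  - assert ((20 * q^2 - 13) * EllK q < (20 * q^2 - 13) * (2 * EllEc q)) by nra. nra.
Qed.

Lemma ff_decr a b : r2 <= a < b -> b <= qstar -> ff b < ff a.
Proof.
  intros Ha Hb. pose proof r2_pos. destruct qstar_spec as [[H1 H2] H3].
  apply (decr_strict ff (fun q => q * ((20 * q^2 - 13) * EllK q - 20 * (2 * q^2 - 1) * EllEc q))); try lra.
  - intros x Hx. apply dff; lra.
  - intros x Hx. destruct (Req_dec x qstar).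
    + subst x. unfold hq in H3.
      assert (Hq1 : qstar^2 < 1) by (apply sq01; lra). pose proof (E_pos qstar Hq1).
      pose proof (q2_gt qstar qstar_gt).
      replace (EllK qstar) with (2 * EllEc qstar) by lra. nra.
    + destruct (Req_dec x r2).
      * subst x. rewrite r2_sq. pose proof (K_ge r2 ltac:(rewrite r2_sq; lra)). pose proof PI_RGT_0. nra.
      * pose proof (m_neg x ltac:(lra)). apply Rlt_le. nra.
  - intros x Hx. pose proof (m_neg x ltac:(lra)). nra.
Qed.


Lemma qhat_ex : exists q, / sqrt 2 <= q < 1 /\ ff q = 0.
Proof.
  destruct qstar_spec as [[H1 H2] H3]. pose proof qstar_gt. pose proof r2_pos.
  destruct (IVT_interv (fun q => - ff q) r2 qstar) as [z [Hz Hf]].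
  - intros a Ha. apply continuity_pt_opp. eapply der_cpt. apply dff. lra.
  - auto.
  - pose proof ff_r2; lra.
  - pose proof (ff_neg qstar ltac:(lra)); lra.
  - exists z. fold r2. split; lra.
Qed.

Lemma qhat_spec : r2 < qhat < qstar /\ ff qhat = 0.
Proof.
  assert (H := epsilon_spec (inhabits 0) (fun q => / sqrt 2 <= q < 1 /\ ff q = 0) qhat_ex).
  fold qhat in H. fold r2 in H. destruct H as [[H1 H2] H3].
  split; auto. split.
  - pose proof ff_r2. unfold r2 in *. destruct H1; auto. rewrite <- H0 in H3. lra.
  - destruct (Rlt_or_le qhat qstar); auto. pose proof (ff_neg qhat ltac:(lra)). lra.
Qed.

Lemma ff_pos q : r2 <= q < qhat -> 0 < ff q.
Proof. intros. destruct qhat_spec as [[H1 H2] H3]. rewrite <- H3. apply ff_decr; lra. Qed.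

Lemma ff_neg2 q : qhat < q < 1 -> ff q < 0.
Proof.
  intros. destruct qhat_spec as [[H1 H2] H3].
  destruct (Rle_or_lt q qstar). rewrite <- H3. apply ff_decr; lra. apply ff_neg; lra.
Qed.

Lemma dgg q : 0 < q < 1 -> is_derive gg q (16 * hq q * ff q / (q * (1 - q^2))).
Proof.
  intros Hq. unfold gg. fold (hq q).
  apply (is_derive_ext (fun t => (8 * hq t ^ 2) * (2 * t^2 - 1))). { intros; unfold hq; reflexivity. }
  eapply dval. apply dmul.
  - apply (is_derive_scal (fun t => hq t ^ 2)). apply (is_derive_pow hq). apply dh'; auto.
  - instantiate (1 := 4 * q). auto_derive; auto. ring.
  - unfold hq, ff, Kd, Ed. simpl. field. assert (q^2 < 1) by (apply sq01; lra). split; lra.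
Qed.

Lemma g_incr a b : r2 <= a < b -> b <= qhat -> gg a < gg b.
Proof.
  intros Ha Hb. destruct qhat_spec as [[H1 H2] H3]. destruct qstar_spec as [[H4 H5] H6]. pose proof r2_pos.
  apply (incr_strict gg (fun q => 16 * hq q * ff q / (q * (1 - q^2)))); try lra.
  - intros x Hx. apply dgg; lra.
  - intros x Hx. assert (0 < hq x) by (apply h_pos; lra). assert (x^2 < 1) by (apply sq01; lra).
    assert (0 <= ff x). { destruct (Req_dec x qhat). subst; lra. apply Rlt_le, ff_pos; lra. }
    unfold Rdiv. apply Rmult_le_pos. nra. apply Rlt_le, Rinv_0_lt_compat. nra.
  - intros x Hx. assert (0 < hq x) by (apply h_pos; lra). assert (x^2 < 1) by (apply sq01; lra).
    assert (0 < ff x) by (apply ff_pos; lra).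
    unfold Rdiv. apply Rmult_lt_0_compat. nra. apply Rinv_0_lt_compat. nra.
Qed.

Lemma g_decr a b : qhat <= a < b -> b <= qstar -> gg b < gg a.
Proof.
  intros Ha Hb. destruct qhat_spec as [[H1 H2] H3]. destruct qstar_spec as [[H4 H5] H6]. pose proof r2_pos.
  apply (decr_strict gg (fun q => 16 * hq q * ff q / (q * (1 - q^2)))); try lra.
  - intros x Hx. apply dgg; lra.
  - intros x Hx. assert (0 <= hq x). { destruct (Req_dec x qstar). subst; lra. apply Rlt_le, h_pos; lra. }
    assert (x^2 < 1) by (apply sq01; lra).
    assert (ff x <= 0). { destruct (Req_dec x qhat). subst; lra. apply Rlt_le, ff_neg2; lra. }
    unfold Rdiv. assert (0 < / (x * (1 - x^2))) by (apply Rinv_0_lt_compat; nra).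
    assert (hq x * ff x <= 0) by nra. nra.
  - intros x Hx. assert (0 < hq x) by (apply h_pos; lra). assert (x^2 < 1) by (apply sq01; lra).
    assert (ff x < 0) by (apply ff_neg2; lra).
    unfold Rdiv. assert (0 < / (x * (1 - x^2))) by (apply Rinv_0_lt_compat; nra).
    assert (hq x * ff x < 0) by nra. nra.
Qed.

Lemma gg_r2 : gg r2 = 0.
Proof. unfold gg. rewrite r2_sq. field. Qed.
Lemma gg_qstar : gg qstar = 0.
Proof. destruct qstar_spec as [_ H]. unfold gg. unfold hq in H. rewrite H. ring. Qed.

Lemma lamhat_pos : 0 < lamhat.
Proof. unfold lamhat. rewrite <- gg_r2. destruct qhat_spec as [[H1 H2] _]. apply g_incr; lra. Qed.

Lemma gg_cont q : 0 < q < 1 -> continuity_pt gg q.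
Proof. intros. eapply der_cpt, dgg; auto. Qed.


Lemma int_der (f : R -> R) x : (forall a b, ex_RInt f a b) -> continuous f x ->
  is_derive (fun y => RInt f 0 y) x (f x).
Proof.
  intros He Hc. apply (is_derive_RInt (V:=R_CompleteNormedModule) f (fun y => RInt f 0 y) 0 x); auto.
  apply filter_forall. intros b. apply (RInt_correct (V:=R_CompleteNormedModule)). apply He.
Qed.

Lemma dF q x : q^2 < 1 -> is_derive (fun y => EllF y q) x (/ sqrt (1 - q^2 * sin x ^ 2)).
Proof.
  intros Hq. unfold EllF. apply (int_der (fun th => / sqrt (1 - q ^ 2 * sin th ^ 2))).
  intros; apply exK; auto. apply cont_invsq; auto.
Qed.

Lemma cont_sq q t : q ^ 2 < 1 -> continuous (fun th => sqrt (1 - q ^ 2 * sin th ^ 2)) t.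
Proof. intros Hq. apply cont_der. auto_derive. dside q t Hq. Qed.

Lemma dEl q x : q^2 < 1 -> is_derive (fun y => EllE y q) x (sqrt (1 - q^2 * sin x ^ 2)).
Proof.
  intros Hq. unfold EllE. apply (int_der (fun th => sqrt (1 - q ^ 2 * sin th ^ 2))).
  intros; apply exE; auto. apply cont_sq; auto.
Qed.

Lemma F0 q : EllF 0 q = 0.
Proof. unfold EllF. rewrite RInt_point. reflexivity. Qed.
Lemma El0 q : EllE 0 q = 0.
Proof. unfold EllE. rewrite RInt_point. reflexivity. Qed.

Lemma F_incr q x y : q^2 < 1 -> x < y -> EllF x q < EllF y q.
Proof.
  intros Hq Hxy. apply (incr_strict (fun y => EllF y q) (fun x => / sqrt (1 - q^2 * sin x ^ 2))); auto.
  - intros; apply dF; auto.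
  - intros t _. apply Rlt_le, Rinv_0_lt_compat, sqD_pos; auto.
  - intros t _. apply Rinv_0_lt_compat, sqD_pos; auto.
Qed.

Lemma F_ge q x : q^2 < 1 -> 0 <= x -> x <= EllF x q.
Proof.
  intros Hq Hx. assert (0 - 0 <= EllF x q - x); [|lra].
  rewrite <- (F0 q) at 1.
  apply (incr_weak (fun y => EllF y q - y) (fun x => / sqrt (1 - q^2 * sin x ^ 2) - 1)); auto.
  - intros t _. apply dminus. apply dF; auto. apply (is_derive_id (K:=R_AbsRing)).
  - intros t _. pose proof (inv_ge1 _ (sqD_pos q t Hq) (sqD_le1 q t Hq)). lra.
Qed.

Lemma F_le q x : q^2 < 1 -> x <= 0 -> EllF x q <= x.
Proof.
  intros Hq Hx. assert (EllF x q - x <= EllF 0 q - 0); [|rewrite F0 in H; lra].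
  apply (incr_weak (fun y => EllF y q - y) (fun x => / sqrt (1 - q^2 * sin x ^ 2) - 1)); auto.
  - intros t _. apply dminus. apply dF; auto. apply (is_derive_id (K:=R_AbsRing)).
  - intros t _. pose proof (inv_ge1 _ (sqD_pos q t Hq) (sqD_le1 q t Hq)). lra.
Qed.

Lemma F_cpt q x : q^2 < 1 -> continuity_pt (fun y => EllF y q) x.
Proof. intros. eapply der_cpt, dF; auto. Qed.

Lemma F_surj q u : q^2 < 1 -> exists x, EllF x q = u.
Proof.
  intros Hq.
  destruct (IVT_interv (fun x => EllF x q - u) (- Rabs u - 1) (Rabs u + 1)) as [z [Hz Hf]].
  - intros a _. apply continuity_pt_minus. apply F_cpt; auto. apply continuity_pt_const. intros ? ?; auto.
  - pose proof (Rabs_pos u); lra.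
  - pose proof (F_le q (- Rabs u - 1) Hq ltac:(pose proof (Rabs_pos u); lra)).
    pose proof (Rle_abs (-u)). rewrite Rabs_Ropp in H0. lra.
  - pose proof (F_ge q (Rabs u + 1) Hq ltac:(pose proof (Rabs_pos u); lra)).
    pose proof (Rle_abs u). lra.
  - exists z. lra.
Qed.

Lemma am_spec q u : q^2 < 1 -> EllF (am u q) q = u.
Proof.
  intros Hq. unfold am. apply (epsilon_spec (inhabits 0) (fun x => EllF x q = u)). apply F_surj; auto.
Qed.

Lemma F_inj q x y : q^2 < 1 -> EllF x q = EllF y q -> x = y.
Proof.
  intros Hq H. destruct (Rtotal_order x y) as [H1|[H1|H1]]; auto.
  - pose proof (F_incr q x y Hq H1); lra.
  - pose proof (F_incr q y x Hq H1); lra.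
Qed.

Lemma am_F q x : q^2 < 1 -> am (EllF x q) q = x.
Proof. intros Hq. apply (F_inj q); auto. apply am_spec; auto. Qed.

Lemma am_incr q u v : q^2 < 1 -> u < v -> am u q < am v q.
Proof.
  intros Hq H. destruct (Rlt_or_le (am u q) (am v q)) as [|H1]; auto.
  destruct H1 as [H1|H1].
  - pose proof (F_incr q _ _ Hq H1). rewrite !am_spec in H0 by auto. lra.
  - apply (f_equal (fun x => EllF x q)) in H1. rewrite !am_spec in H1 by auto. lra.
Qed.

Lemma am_cpt q u : q^2 < 1 -> continuity_pt (fun v => am v q) u.
Proof.
  intros Hq.
  apply (continuity_pt_recip_prelim (fun y => EllF y q) (fun v => am v q) (am u q - 1) (am u q + 1)).
  - lra.
  - intros; apply F_incr; auto.
  - intros x _. unfold comp, id. apply am_F; auto.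
  - intros; apply F_cpt; auto.
  - rewrite <- (am_spec q u Hq) at 2 3. split; apply F_incr; auto; lra.
Qed.

Definition Fder q (Hq : q^2 < 1) a : derivable_pt (fun y => EllF y q) a :=
  exist _ (/ sqrt (1 - q^2 * sin a ^ 2)) (proj1 (is_derive_Reals _ _ _) (dF q a Hq)).

Lemma am_der q u : q^2 < 1 -> is_derive (fun v => am v q) u (sqrt (1 - q^2 * sin (am u q) ^ 2)).
Proof.
  intros Hq. apply is_derive_Reals.
  assert (Hi : am (u - 1) q <= am u q <= am (u + 1) q).
  { split; apply Rlt_le, am_incr; auto; lra. }
  pose proof (derivable_pt_lim_recip_interv (fun y => EllF y q) (fun v => am v q) (u - 1) (u + 1) u
     (fun a _ => Fder q Hq a) (am_cpt q u Hq) ltac:(lra) ltac:(lra) Hi) as H.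
  assert (H1 : forall x, u - 1 <= x <= u + 1 -> comp (fun y => EllF y q) (fun v => am v q) x = id x).
  { intros x _. unfold comp, id. apply am_spec; auto. }
  specialize (H H1). simpl in H.
  assert (H2 : / sqrt (1 - q ^ 2 * sin (am u q) ^ 2) <> 0).
  { apply Rinv_neq_0_compat, sqD_neq; auto. }
  specialize (H H2).
  replace (sqrt (1 - q ^ 2 * sin (am u q) ^ 2)) with (1 / / sqrt (1 - q ^ 2 * sin (am u q) ^ 2)).
  exact H. field. apply sqD_neq; auto.
Qed.


Lemma const_der (f : R -> R) x y : (forall t, is_derive f t 0) -> f x = f y.
Proof.
  intros H. destruct (Rle_or_lt x y).
  - destruct (mvt f (fun _ => 0) x y H0 (fun t _ => H t)) as [c [_ Hc]]. lra.
  - destruct (mvt f (fun _ => 0) y x ltac:(lra) (fun t _ => H t)) as [c [_ Hc]]. lra.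
Qed.

Section Per.
Variable phi : R -> R.
Hypothesis phi_ex : forall a b, ex_RInt phi a b.
Hypothesis phi_c : forall x, continuous phi x.
Hypothesis phi_per : forall x, phi (x + PI) = phi x.
Hypothesis phi_even : forall x, phi (- x) = phi x.
Hypothesis phi_sym : forall x, phi (PI - x) = phi x.

Let I x : R := RInt phi 0 x.

Lemma dI x : is_derive I x (phi x).
Proof. apply int_der; auto. Qed.

Lemma dIc (a b : R) x : is_derive (fun t => I (a * t + b)) x (a * phi (a * x + b)).
Proof.
  eapply dval. apply (is_derive_comp I (fun t => a * t + b)). apply dI.
  auto_derive; auto.
  match goal with |- scal ?u ?v = _ => change (scal u v) with (u * v) end. ring.
Qed.

Lemma I0 : I 0 = 0.
Proof. unfold I. rewrite RInt_point. reflexivity. Qed.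

Lemma I_shift x : I (x + PI) = I x + I PI.
Proof.
  assert (H : (fun t => I (1 * t + PI) - I (1 * t + 0)) x = (fun t => I (1 * t + PI) - I (1 * t + 0)) 0).
  { apply (const_der (fun t => I (1 * t + PI) - I (1 * t + 0))). intros t. eapply dval. apply dminus; apply dIc.
    rewrite !Rmult_1_l, Rplus_0_r, phi_per. ring. }
  simpl in H. rewrite !Rmult_1_l, !Rplus_0_r, Rplus_0_l in H. rewrite I0 in H. lra.
Qed.

Lemma I_odd x : I (- x) = - I x.
Proof.
  assert (H : (fun t => I (-1 * t + 0) + I (1 * t + 0)) x = (fun t => I (-1 * t + 0) + I (1 * t + 0)) 0).
  { apply (const_der (fun t => I (-1 * t + 0) + I (1 * t + 0))). intros t. eapply dval. apply dplus; apply dIc.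
    replace (-1 * t + 0) with (- (1 * t + 0)) by ring. rewrite phi_even. ring. }
  simpl in H. replace (-1 * x + 0) with (- x) in H by ring. replace (-1 * 0 + 0) with 0 in H by ring.
  rewrite !Rmult_1_l, !Rplus_0_r, I0 in H. lra.
Qed.

Lemma I_pi : I PI = 2 * I (PI/2).
Proof.
  assert (H : (fun t => I (-1 * t + PI) + I (1 * t + 0)) (PI/2) = (fun t => I (-1 * t + PI) + I (1 * t + 0)) 0).
  { apply (const_der (fun t => I (-1 * t + PI) + I (1 * t + 0))). intros t. eapply dval. apply dplus; apply dIc.
    replace (-1 * t + PI) with (PI - (1 * t + 0)) by ring. rewrite phi_sym. ring. }
  simpl in H. replace (-1 * (PI/2) + PI) with (PI/2) in H by field. replace (-1 * 0 + PI) with PI in H by ring.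
  rewrite !Rmult_1_l, !Rplus_0_r, I0 in H. lra.
Qed.

Lemma I_n n : I (- (PI/2) + INR n * PI) = (2 * INR n - 1) * I (PI/2).
Proof.
  induction n.
  - simpl. rewrite Rmult_0_l, Rplus_0_r, I_odd. ring.
  - rewrite S_INR. replace (- (PI / 2) + (INR n + 1) * PI) with ((- (PI / 2) + INR n * PI) + PI) by ring.
    rewrite I_shift, IHn, I_pi. ring.
Qed.

End Per.

Lemma sin2_shift x : sin (x + PI) ^ 2 = sin x ^ 2.
Proof. rewrite neg_sin. ring. Qed.
Lemma sin2_even x : sin (- x) ^ 2 = sin x ^ 2.
Proof. rewrite sin_neg. ring. Qed.
Lemma sin2_sym x : sin (PI - x) ^ 2 = sin x ^ 2.
Proof. rewrite sin_PI_x. ring. Qed.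

Lemma F_n q n : q^2 < 1 -> EllF (- (PI/2) + INR n * PI) q = (2 * INR n - 1) * EllK q.
Proof.
  intros Hq. unfold EllK, EllF.
  apply (I_n (fun th => / sqrt (1 - q ^ 2 * sin th ^ 2))).
  - intros; apply exK; auto.
  - intros; apply cont_invsq; auto.
  - intros; rewrite sin2_shift; auto.
  - intros; rewrite sin2_even; auto.
  - intros; rewrite sin2_sym; auto.
Qed.

Lemma E_n q n : q^2 < 1 -> EllE (- (PI/2) + INR n * PI) q = (2 * INR n - 1) * EllEc q.
Proof.
  intros Hq. unfold EllEc, EllE.
  apply (I_n (fun th => sqrt (1 - q ^ 2 * sin th ^ 2))).
  - intros; apply exE; auto.
  - intros; apply cont_sq; auto.
  - intros; rewrite sin2_shift; auto.
  - intros; rewrite sin2_even; auto.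
  - intros; rewrite sin2_sym; auto.
Qed.


Lemma dcomp (h u : R -> R) s dh du : is_derive h (u s) dh -> is_derive u s du -> is_derive (fun t => h (u t)) s (dh * du).
Proof.
  intros H1 H2. eapply dval. apply (is_derive_comp h u); eauto.
  change (scal du dh) with (du * dh). ring.
Qed.

Lemma RInt_ext_R (f g : R -> R) a b : (forall x, f x = g x) -> RInt f a b = RInt g a b.
Proof. intros; apply RInt_ext; auto. Qed.

Section Curve.
Variables (l : R) (n : nat) (q : R).
Hypothesis Hq : 0 < q < 1.
Hypothesis Ha : alpha_of l n q <> 0.

Let a := alpha_of l n q.
Let Kq := EllK q.
Let A s := am (a * s - Kq) q.
Let Dq x := sqrt (1 - q^2 * sin x ^ 2).

Lemma Hq2 : q^2 < 1. Proof. apply sq01; lra. Qed.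

Lemma Dq_sq x : Dq x * Dq x = 1 - q^2 * sin x ^ 2.
Proof. unfold Dq. apply sqrt_sqrt, Rlt_le, Dpos, Hq2. Qed.

Lemma dA s : is_derive A s (a * Dq (A s)).
Proof.
  eapply dval. apply (dcomp (fun v => am v q) (fun s => a * s - Kq)).
  apply am_der, Hq2. auto_derive; auto. unfold A, Dq. ring.
Qed.

Lemma dDq x : is_derive Dq x (- q^2 * sin x * cos x / Dq x).
Proof.
  unfold Dq. auto_derive. apply Dpos, Hq2.
  replace (1 + - (q * (q * 1) * (sin x * (sin x * 1)))) with (1 - q ^ 2 * sin x ^ 2) by ring.
  pose proof (sqD_pos q x Hq2). field. lra.
Qed.

Definition X1 s := 1 - 2 * q^2 * sin (A s) ^ 2.
Definition Y1 s := - 2 * q * sin (A s) * Dq (A s).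

Lemma xc_eq : xc (gamma_q l n q) = fun s => / a * (2 * EllE (A s) q + 2 * EllEc q - a * s).
Proof. reflexivity. Qed.
Lemma yc_eq : yc (gamma_q l n q) = fun s => / a * (2 * q * cos (A s)).
Proof. reflexivity. Qed.

Lemma dX s : is_derive (xc (gamma_q l n q)) s (X1 s).
Proof.
  rewrite xc_eq. eapply dval.
  apply (is_derive_scal (fun s => 2 * EllE (A s) q + 2 * EllEc q - a * s)).
  apply dminus. apply dplus. apply (is_derive_scal (fun s => EllE (A s) q)).
  apply (dcomp (fun v => EllE v q) A). apply dEl, Hq2. apply dA.
  apply (is_derive_const (K:=R_AbsRing)).
  apply (is_derive_scal (fun s => s)). apply (is_derive_id (K:=R_AbsRing)).
  unfold X1. change zero with 0. change one with 1. pose proof (Dq_sq (A s)) as HS. unfold Dq in *.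
  set (S := sqrt (1 - q ^ 2 * sin (A s) ^ 2)) in *.
  replace (2 * (S * (a * S)) + 0 - a * 1) with (a * (2 * (S * S) - 1)) by ring.
  rewrite HS. field. exact Ha.
Qed.

Lemma dY s : is_derive (yc (gamma_q l n q)) s (Y1 s).
Proof.
  rewrite yc_eq. eapply dval.
  apply (is_derive_scal (fun s => 2 * q * cos (A s))).
  apply (is_derive_scal (fun s => cos (A s))).
  apply (dcomp cos A). apply is_derive_cos. apply dA.
  unfold Y1. field. exact Ha.
Qed.

Lemma DX : Derive (xc (gamma_q l n q)) = X1.
Proof. apply functional_extensionality. intros s. apply is_derive_unique, dX. Qed.
Lemma DY : Derive (yc (gamma_q l n q)) = Y1.
Proof. apply functional_extensionality. intros s. apply is_derive_unique, dY. Qed.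

Lemma dX1 s : is_derive X1 s (- 4 * q^2 * sin (A s) * cos (A s) * (a * Dq (A s))).
Proof.
  unfold X1. eapply dval. apply dminus. apply (is_derive_const (K:=R_AbsRing)).
  apply (is_derive_scal (fun s => sin (A s) ^ 2)).
  apply (dcomp (fun x => x ^ 2) (fun s => sin (A s))). auto_derive; auto.
  apply (dcomp sin A). apply is_derive_sin. apply dA.
  change zero with 0. ring.
Qed.

Lemma dY1 s : is_derive Y1 s (- 2 * q * a * cos (A s) * (1 - 2 * q^2 * sin (A s) ^ 2)).
Proof.
  unfold Y1. eapply dval. apply dmul.
  apply (is_derive_scal (fun s => sin (A s))). apply (dcomp sin A). apply is_derive_sin. apply dA.
  apply (dcomp Dq A). apply dDq. apply dA.
  pose proof (sqD_pos q (A s) Hq2). pose proof (Dq_sq (A s)) as HS. unfold Dq in *.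
  set (S := sqrt (1 - q ^ 2 * sin (A s) ^ 2)) in *.
  apply (Rmult_eq_reg_r S); [|lra]. field_simplify; [|lra].
  replace (S^3) with (S * (S * S)) by ring. rewrite HS. ring.
Qed.

Lemma speed1 s : speed (gamma_q l n q) s = 1.
Proof.
  unfold speed. rewrite DX, DY. unfold X1, Y1.
  replace ((1 - 2 * q ^ 2 * sin (A s) ^ 2) ^ 2 + (- 2 * q * sin (A s) * Dq (A s)) ^ 2) with 1.
  apply sqrt_1.
  replace ((- 2 * q * sin (A s) * Dq (A s)) ^ 2) with (4 * q^2 * sin (A s) ^ 2 * (Dq (A s) * Dq (A s))) by ring.
  rewrite Dq_sq. ring.
Qed.

Lemma curv_eq s : curv (gamma_q l n q) s = - 2 * q * a * cos (A s).
Proof.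
  unfold curv. rewrite speed1. rewrite DX, DY.
  rewrite (is_derive_unique _ _ _ (dX1 s)), (is_derive_unique _ _ _ (dY1 s)).
  unfold X1, Y1. 
  replace ((- 2 * q * sin (A s) * Dq (A s)) * (- 4 * q ^ 2 * sin (A s) * cos (A s) * (a * Dq (A s)))) with
    (8 * q^3 * a * sin (A s) ^ 2 * cos (A s) * (Dq (A s) * Dq (A s))) by ring.
  rewrite Dq_sq. field.
Qed.

Lemma dcosA s : is_derive (fun s => cos (A s)) s (- sin (A s) * (a * Dq (A s))).
Proof. apply (dcomp cos A). apply is_derive_cos. apply dA. Qed.

Lemma cont_integrand x : continuous (fun s => 4 * q^2 * a^2 * cos (A s) ^ 2) x.
Proof.
  apply cont_der. eexists. apply (is_derive_scal (fun s => cos (A s) ^ 2)).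
  apply (dcomp (fun x => x ^ 2) (fun s => cos (A s))). auto_derive; auto. apply dcosA.
Qed.

Lemma AL : A (2 * INR n * Kq / a) = - (PI/2) + INR n * PI.
Proof.
  unfold A. replace (a * (2 * INR n * Kq / a) - Kq) with ((2 * INR n - 1) * EllK q) by (unfold Kq; field; exact Ha).
  rewrite <- (F_n q n Hq2). apply am_F, Hq2.
Qed.

Lemma A0 : A 0 = - (PI/2) + INR 0 * PI.
Proof.
  unfold A. replace (a * 0 - Kq) with ((2 * INR 0 - 1) * EllK q) by (unfold Kq; simpl; ring).
  rewrite <- (F_n q 0 Hq2). apply am_F, Hq2.
Qed.

Lemma energy_eq lam : Energy lam (gamma_q l n q) (length_q l n q) =
  8 * INR n * a * (EllEc q - (1 - q^2) * EllK q) + lam * (2 * INR n * EllK q / a).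
Proof.
  unfold Energy, length_q. fold a.
  rewrite (RInt_ext_R (fun s => curv (gamma_q l n q) s ^ 2 * speed (gamma_q l n q) s) (fun s => 4 * q^2 * a^2 * cos (A s) ^ 2)).
  2:{ intros x. rewrite curv_eq, speed1. fold a. ring. }
  rewrite (RInt_ext_R (fun s => speed (gamma_q l n q) s) (fun _ => 1)).
  2:{ intros x. apply speed1. }
  rewrite RInt_cst1.
  set (L := 2 * INR n * EllK q / a).
  assert (H : is_RInt (fun s => 4 * q^2 * a^2 * cos (A s) ^ 2) 0 L
     (minus ((fun s => 4 * a * EllE (A s) q - 4 * a^2 * (1 - q^2) * s) L) ((fun s => 4 * a * EllE (A s) q - 4 * a^2 * (1 - q^2) * s) 0))).
  { apply (@is_RInt_derive R_CompleteNormedModule (fun s => 4 * a * EllE (A s) q - 4 * a^2 * (1 - q^2) * s)).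
    - intros x _. eapply dval. apply dminus.
      apply (is_derive_scal (fun s => EllE (A s) q)). apply (dcomp (fun v => EllE v q) A). apply dEl, Hq2. apply dA.
      apply (is_derive_scal (fun s => s)). apply (is_derive_id (K:=R_AbsRing)).
      change one with 1. pose proof (Dq_sq (A x)) as HS. unfold Dq in *.
      set (S := sqrt (1 - q ^ 2 * sin (A x) ^ 2)) in *.
      replace (4 * a * (S * (a * S)) - 4 * a ^ 2 * (1 - q ^ 2) * 1) with (4 * a^2 * (S * S - 1 + q^2)) by ring.
      rewrite HS, cos2p. ring.
    - intros x _. apply cont_integrand. }
  apply (@is_RInt_unique R_CompleteNormedModule) in H. rewrite H.
  change (minus ?u ?v) with (u - v).
  assert (HAL : A L = - (PI/2) + INR n * PI) by (unfold L; apply AL).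
  rewrite HAL, A0, !E_n by apply Hq2. simpl INR. unfold L. field. exact Ha.
Qed.

End Curve.


Lemma ceilZ_spec x : IZR (ceilZ x) - 1 < x <= IZR (ceilZ x).
Proof.
  unfold ceilZ. destruct (archimed x) as [H1 H2].
  destruct (Req_EM_T (IZR (up x) - 1) x) as [E|E].
  - rewrite minus_IZR. simpl. lra.
  - lra.
Qed.

Lemma ceilZ_IZR k : ceilZ (IZR k) = k.
Proof.
  pose proof (ceilZ_spec (IZR k)) as [H1 H2].
  assert (IZR (ceilZ (IZR k)) < IZR k + 1) by lra.
  replace (IZR k + 1) with (IZR (k + 1)) in H by (rewrite plus_IZR; reflexivity).
  apply lt_IZR in H. apply le_IZR in H2. lia.
Qed.

Lemma ceil_nat (m : nat) : Z.to_nat (ceilZ (INR m)) = m.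
Proof. rewrite INR_IZR_INZ, ceilZ_IZR. apply Nat2Z.id. Qed.

Lemma nlam_ge lam l : 0 < lam -> 0 < l ->
  (1 <= nlam lam l)%nat /\ sqrt (lam * l ^ 2 / lamhat) <= INR (nlam lam l).
Proof.
  intros Hlam Hl. pose proof lamhat_pos.
  set (x := sqrt (lam * l ^ 2 / lamhat)).
  assert (Hx : 0 < x). { apply sqrt_lt_R0. apply Rdiv_lt_0_compat; auto. apply Rmult_lt_0_compat; auto. apply pow_lt; auto. }
  pose proof (ceilZ_spec x) as [H1 H2].
  assert (Hz : (1 <= ceilZ x)%Z). { apply le_IZR. assert (0 < IZR (ceilZ x)) by lra. apply lt_IZR in H0. apply IZR_le. lia. }
  unfold nlam. fold x. split.
  - lia.
  - rewrite INR_IZR_INZ, Z2Nat.id by lia. auto.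
Qed.

Lemma c_bounds lam l n : 0 < lam -> 0 < l -> (nlam lam l <= n)%nat ->
  (0 < n)%nat /\ 0 < lam * l ^ 2 / INR n ^ 2 <= lamhat.
Proof.
  intros Hlam Hl Hn. destruct (nlam_ge lam l Hlam Hl) as [H1 H2].
  pose proof lamhat_pos.
  assert (Hn0 : (0 < n)%nat) by lia. split; auto.
  assert (HN : 0 < INR n) by (apply lt_0_INR; lia).
  assert (HL : 0 < lam * l ^ 2) by (apply Rmult_lt_0_compat; auto; apply pow_lt; auto).
  split. apply Rdiv_lt_0_compat; auto. apply pow_lt; auto.
  apply le_INR in Hn.
  assert (Hs : sqrt (lam * l ^ 2 / lamhat) <= INR n) by lra.
  assert (Hs2 : lam * l ^ 2 / lamhat <= INR n ^ 2).
  { rewrite <- (sqrt_sqrt (lam * l ^ 2 / lamhat)). 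
    replace (INR n ^ 2) with (INR n * INR n) by ring. apply Rmult_le_compat; auto; apply sqrt_pos.
    apply Rlt_le, Rdiv_lt_0_compat; auto. }
  assert (Hm : lam*l^2 <= INR n^2 * lamhat).
  { replace (lam * l^2) with ((lam*l^2/lamhat) * lamhat) by (field; lra). apply Rmult_le_compat_r; lra. }
  assert (HN2 : 0 < INR n ^ 2) by (apply pow_lt; auto).
  apply (Rmult_le_reg_r (INR n^2)); auto.
  replace (lam*l^2/INR n^2 * INR n^2) with (lam*l^2) by (field; lra). lra.
Qed.

Lemma q1_ex c : 0 < c <= lamhat -> exists q, / sqrt 2 < q <= qhat /\ gg q = c.
Proof.
  intros Hc. destruct qhat_spec as [[H1 H2] H3]. destruct qstar_spec as [[H4 H5] H6]. pose proof r2_pos.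
  destruct (Req_dec c lamhat) as [E|E].
  - exists qhat. fold r2. split; [lra|]. subst; reflexivity.
  - destruct (IVT_interv (fun q => gg q - c) r2 qhat) as [z [Hz Hf]].
    + intros a Ha. apply continuity_pt_minus. apply gg_cont; lra. apply continuity_pt_const. intros ? ?; auto.
    + lra.
    + rewrite gg_r2. lra.
    + unfold lamhat in *. lra.
    + exists z. fold r2. assert (z <> r2). { intro; subst. rewrite gg_r2 in Hf. lra. } split; lra.
Qed.

Lemma q2_ex c : 0 < c <= lamhat -> exists q, qhat <= q < qstar /\ gg q = c.
Proof.
  intros Hc. destruct qhat_spec as [[H1 H2] H3]. destruct qstar_spec as [[H4 H5] H6]. pose proof r2_pos.
  destruct (Req_dec c lamhat) as [E|E].
  - exists qhat. split; [lra|]. subst; reflexivity.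
  - destruct (IVT_interv (fun q => c - gg q) qhat qstar) as [z [Hz Hf]].
    + intros a Ha. apply continuity_pt_minus. apply continuity_pt_const. intros ? ?; auto. apply gg_cont; lra.
    + lra.
    + unfold lamhat in *. lra.
    + rewrite gg_qstar. lra.
    + exists z. assert (z <> qstar). { intro; subst. rewrite gg_qstar in Hf. lra. } split; lra.
Qed.

Lemma q1_spec c : 0 < c <= lamhat -> r2 < q1 c <= qhat /\ gg (q1 c) = c.
Proof.
  intros Hc. unfold q1. pose proof (epsilon_spec (inhabits 0) (fun q => / sqrt 2 < q <= qhat /\ gg q = c) (q1_ex c Hc)).
  exact H.
Qed.

Lemma q2_spec c : 0 < c <= lamhat -> qhat <= q2 c < qstar /\ gg (q2 c) = c.
Proof.
  intros Hc. unfold q2. exact (epsilon_spec (inhabits 0) (fun q => qhat <= q < qstar /\ gg q = c) (q2_ex c Hc)).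
Qed.


Definition Phi2 lam l N q := 16 * N^2 / l * (hq q * (EllEc q - (1 - q^2) * EllK q)) + lam * l * (EllK q / hq q).
Definition rd q := (Kd q * hq q - EllK q * (2 * Ed q - Kd q)) / hq q ^ 2.

Lemma energy_Phi2 lam l n q : 0 < l -> (0 < n)%nat -> 0 < q < 1 -> 0 < hq q ->
  Energy lam (gamma_q l n q) (length_q l n q) = Phi2 lam l (INR n) q.
Proof.
  intros Hl Hn Hq Hh. assert (HN : 0 < INR n) by (apply lt_0_INR; lia).
  assert (Ha : alpha_of l n q = 2 * INR n / l * hq q) by reflexivity.
  rewrite energy_eq; auto.
  - rewrite Ha. unfold Phi2. field. split; lra.
  - rewrite Ha. apply Rgt_not_eq. apply Rmult_lt_0_compat; auto. apply Rdiv_lt_0_compat; lra.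
Qed.

Lemma dPhi2 lam l N q : 0 < l -> 0 < N -> 0 < q < 1 -> 0 < hq q ->
  is_derive (Phi2 lam l N) q (N^2 / l * (lam * l^2 / N^2 - gg q) * rd q).
Proof.
  intros Hl HN Hq Hh. unfold Phi2. eapply dval. apply dplus.
  apply (is_derive_scal (fun q => hq q * (EllEc q - (1 - q^2) * EllK q))).
  apply dmul. apply dh'; auto. apply dminus. apply dE'; auto. apply dmul.
  instantiate (1 := - 2 * q). auto_derive; auto. ring. apply dK'; auto.
  apply (is_derive_scal (fun q => EllK q / hq q)). apply is_derive_div. apply dK'; auto. apply dh'; auto. lra.
  unfold rd, gg, Kd, Ed. unfold hq in *. field.
  assert (q^2 < 1) by (apply sq01; lra). repeat split; lra.
Qed.

Lemma rd_pos q : 0 < q < 1 -> 0 < hq q -> 0 < rd q.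
Proof.
  intros Hq Hh. unfold rd. pose proof (Kd_pos q Hq). pose proof (hd_neg q Hq).
  pose proof (K_ge q (sq01 q ltac:(lra))). pose proof PI_RGT_0.
  apply Rdiv_lt_0_compat; [|apply pow_lt; auto]. nra.
Qed.

Lemma gg_ge c x : 0 < c <= lamhat -> q1 c <= x <= q2 c -> c <= gg x.
Proof.
  intros Hc Hx. destruct (q1_spec c Hc) as [[A1 A2] A3]. destruct (q2_spec c Hc) as [[B1 B2] B3].
  destruct (Rle_or_lt x qhat).
  - destruct (Req_dec x (q1 c)). subst; lra. rewrite <- A3 at 1. apply Rlt_le, g_incr; lra.
  - destruct (Req_dec x (q2 c)). subst; lra. rewrite <- B3 at 1. apply Rlt_le, g_decr; lra.
Qed.

Lemma gg_gt c x : 0 < c <= lamhat -> q1 c < x < q2 c -> c < gg x.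
Proof.
  intros Hc Hx. destruct (q1_spec c Hc) as [[A1 A2] A3]. destruct (q2_spec c Hc) as [[B1 B2] B3].
  destruct (Rle_or_lt x qhat).
  - rewrite <- A3 at 1. apply g_incr; lra.
  - rewrite <- B3 at 1. apply g_decr; lra.
Qed.

Lemma Phi_cmp lam l N : 0 < l -> 0 < N -> 0 < lam * l^2 / N^2 <= lamhat ->
  Phi2 lam l N (q2 (lam * l^2 / N^2)) <= Phi2 lam l N (q1 (lam * l^2 / N^2)) /\
  (q1 (lam * l^2 / N^2) < q2 (lam * l^2 / N^2) ->
   Phi2 lam l N (q2 (lam * l^2 / N^2)) < Phi2 lam l N (q1 (lam * l^2 / N^2))).
Proof.
  intros Hl HN Hc. set (c := lam * l^2 / N^2) in *.
  destruct (q1_spec c Hc) as [[A1 A2] A3]. destruct (q2_spec c Hc) as [[B1 B2] B3].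
  destruct qstar_spec as [[H4 H5] H6]. pose proof r2_pos.
  assert (Hd : forall x, q1 c <= x <= q2 c -> is_derive (Phi2 lam l N) x (N^2 / l * (c - gg x) * rd x)).
  { intros x Hx. apply dPhi2; auto. lra. apply h_pos; lra. }
  assert (Hn : forall x, q1 c <= x <= q2 c -> N^2 / l * (c - gg x) * rd x <= 0).
  { intros x Hx. pose proof (gg_ge c x Hc Hx). pose proof (rd_pos x ltac:(lra) (h_pos x ltac:(lra))).
    assert (0 < N^2 / l) by (apply Rdiv_lt_0_compat; auto; apply pow_lt; auto).
    assert (N ^ 2 / l * (c - gg x) <= 0) by nra. nra. }
  split.
  - apply (decr_weak _ (fun x => N^2 / l * (c - gg x) * rd x)); auto; lra.
  - intros Hlt. apply (decr_strict _ (fun x => N^2 / l * (c - gg x) * rd x)); auto.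
    intros x Hx. pose proof (gg_gt c x Hc Hx). pose proof (rd_pos x ltac:(lra) (h_pos x ltac:(lra))).
    assert (0 < N^2 / l) by (apply Rdiv_lt_0_compat; auto; apply pow_lt; auto).
    assert (N ^ 2 / l * (c - gg x) < 0) by nra. nra.
Qed.


Lemma nlam_sq lam l (m : nat) : lam * l ^ 2 = INR m ^ 2 * lamhat -> nlam lam l = m.
Proof.
  intros Hm. pose proof lamhat_pos. unfold nlam. rewrite Hm.
  replace (INR m ^ 2 * lamhat / lamhat) with (INR m ^ 2) by (field; lra).
  rewrite sqrt_pow2 by apply pos_INR. apply ceil_nat.
Qed.

Theorem lemma4p5 (lam l : R) (n : nat) :
  0 < lam -> 0 < l -> (nlam lam l <= n)%nat ->
  energy_larc lam l n <= energy_sarc lam l n /\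
  (energy_larc lam l n = energy_sarc lam l n <->
     ((exists m : nat, lam * l ^ 2 = (INR m) ^ 2 * lamhat) /\ n = nlam lam l)).
Proof.
  intros Hlam Hl Hn.
  destruct (c_bounds lam l n Hlam Hl Hn) as [Hn0 Hc].
  assert (HN : 0 < INR n) by (apply lt_0_INR; lia).
  destruct (q1_spec _ Hc) as [[A1 A2] A3]. destruct (q2_spec _ Hc) as [[B1 B2] B3].
  destruct qstar_spec as [[H4 H5] H6]. destruct qhat_spec as [[H7 H8] H9]. pose proof r2_pos.
  assert (ES : energy_sarc lam l n = Phi2 lam l (INR n) (q1 (lam * l^2 / INR n ^ 2))).
  { unfold energy_sarc, gamma_sarc, q_sarc. apply energy_Phi2; auto. lra. apply h_pos; lra. }
  assert (EL : energy_larc lam l n = Phi2 lam l (INR n) (q2 (lam * l^2 / INR n ^ 2))).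
  { unfold energy_larc, gamma_larc, q_larc. apply energy_Phi2; auto. lra. apply h_pos; lra. }
  destruct (Phi_cmp lam l (INR n) Hl HN Hc) as [Hle Hlt].
  rewrite ES, EL. split; [exact Hle|]. split.
  - intros Heq.
    assert (Q : q1 (lam * l^2 / INR n ^ 2) = q2 (lam * l^2 / INR n ^ 2)).
    { destruct (Rlt_or_le (q1 (lam * l^2 / INR n ^ 2)) (q2 (lam * l^2 / INR n ^ 2))) as [Hq|Hq].
      - specialize (Hlt Hq). lra.
      - lra. }
    assert (Qh : q1 (lam * l^2 / INR n ^ 2) = qhat) by lra.
    assert (Hcl : lam * l^2 / INR n ^ 2 = lamhat) by (unfold lamhat; rewrite <- Qh; auto).
    assert (Hm : lam * l ^ 2 = INR n ^ 2 * lamhat).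
    { rewrite <- Hcl. field. lra. }
    split. exists n. exact Hm. symmetry. apply nlam_sq; auto.
  - intros [[m Hm] Hnl]. rewrite (nlam_sq lam l m Hm) in Hnl. subst m.
    assert (Hcl : lam * l^2 / INR n ^ 2 = lamhat) by (rewrite Hm; field; lra).
    assert (Q1 : q1 (lam * l^2 / INR n ^ 2) = qhat).
    { destruct A2 as [A2|A2]; auto. exfalso. pose proof (g_incr _ _ (conj (Rlt_le _ _ A1) A2) (Rle_refl _)).
      rewrite A3, Hcl in H0. unfold lamhat in H0. lra. }
    assert (Q2 : q2 (lam * l^2 / INR n ^ 2) = qhat).
    { destruct B1 as [B1|B1]; auto. exfalso. pose proof (g_decr _ _ (conj (Rle_refl _) B1) (Rlt_le _ _ B2)).
      rewrite B3, Hcl in H0. unfold lamhat in H0. lra. }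
    rewrite Q1, Q2. reflexivity.
Qed.
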